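(* Let $A=J(\lambda,n)\in\mathrm{SL}(n,\mathbb{C})$ be a single Jordan block with $|\lambda|=1$. For $b\in\mathbb{C}$ with $|b|=1$, let $B=[b_{i,j}]_{1\le i,j\le n}$ be defined by $b_{i,j}=0$ if $j<i$; $b_{i,j}=(-1)^{j+1}\binom{j-2}{i-2}\dfrac{b}{\lambda^{i+j-2}}$ if $j\ge i$ and $i>1$; $b_{1,1}=b$; and $b_{1,j}=0$ for $2\le j\le n$. Then for a suitable choice of $b$ with $|b|=1$, the matrix $B$ lies in $\mathrm{SL}(n,\mathbb{C})$, satisfies $B\overline{B}=I$, and $BAB^{-1}=\overline{A}^{-1}$; that is, $B$ is a strong $c$-reverser of $A$.
   Context: $J(\lambda,n)$ is the $n\times n$ Jordan block with $\lambda$ on the diagonal and $1$ on the superdiagonal. $\overline{g}$ denotes entrywise complex conjugation. *)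

(* Defs.v *)
From HB Require Import structures.
From mathcomp Require Import all_boot all_order all_algebra.
From mathcomp Require Import complex.
From mathcomp Require Import reals.
Set Implicit Arguments. Unset Strict Implicit. Unset Printing Implicit Defensive.
Import Order.TTheory GRing.Theory Num.Theory.
Local Open Scope ring_scope.

(* Convention: matrices are indexed by 'I_n, i.e. 0-based indices;
   the paper's 1-based index i corresponds to the ordinal i-1. *)

Definition jordan_block {F : pzRingType} (n : nat) (lam : F) : 'M[F]_n :=
  \matrix_(i < n, j < n)
    ((i == j :> nat)%:R * lam + (j == i.+1 :> nat)%:R).

Definition mxconj {R : rcfType} {m n : nat} (M : 'M[R[i]]_(m, n)) :=
  map_mx (@conjc R) M.

(* The matrix B of the statement, with 0-based indices i, j
   (paper indices i+1, j+1):
   - entry 0 if j < i;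
   - row 0: b at (0,0), 0 elsewhere;
   - i >= 1, j >= i: (-1)^(j+2) * C(j-1, i-1) * b / lam^(i+j). *)
Definition Bmat {R : rcfType} (n : nat) (lam b : R[i]) : 'M[R[i]]_n :=
  \matrix_(i < n, j < n)
    (if (j < i)%N then 0
     else if i == 0 :> nat then (if j == 0 :> nat then b else 0)
     else (-1) ^+ (j.+2) * ('C(j.-1, i.-1))%:R * b / lam ^+ (i + j)).

(* Main.v *)
Require Import Defs.
From HB Require Import structures.
From mathcomp Require Import all_boot all_order all_algebra.
From mathcomp Require Import complex.
From mathcomp Require Import reals.
From mathcomp Require Import ring zify.
Import Order.TTheory GRing.Theory Num.Theory.
Set Implicit Arguments. Unset Strict Implicit. Unset Printing Implicit Defensive.
Local Open Scope ring_scope.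

Definition fB {R : rcfType} (lam b : R[i]) (i j : nat) : R[i] :=
  if (j < i)%N then 0
  else if i == 0 :> nat then (if j == 0 :> nat then b else 0)
  else (-1) ^+ (j.+2) * ('C(j.-1, i.-1))%:R * b / lam ^+ (i + j).

Lemma BmatE (R : rcfType) n (lam b : R[i]) (i j : 'I_n) :
  Bmat n lam b i j = fB lam b i j.
Proof. by rewrite mxE. Qed.

Lemma fB00 (R : rcfType) (lam b : R[i]) : fB lam b 0 0 = b.
Proof. by []. Qed.
Lemma fB0S (R : rcfType) (lam b : R[i]) j : fB lam b 0 j.+1 = 0.
Proof. by []. Qed.
Lemma fBS0 (R : rcfType) (lam b : R[i]) i : fB lam b i.+1 0 = 0.
Proof. by []. Qed.
Lemma fBSS (R : rcfType) (lam b : R[i]) i j :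
  fB lam b i.+1 j.+1 = (-1) ^+ j.+1 * ('C(j, i))%:R * b / lam ^+ (i + j + 2).
Proof.
rewrite /fB ltnS; case: ltnP => h.
  by rewrite bin_small // mulr0 mul0r mul0r.
have -> : (-1 : R[i]) ^+ j.+3 = (-1) ^+ j.+1 by rewrite !exprS !mulN1r opprK.
by rewrite addn2 addSn addnS.
Qed.
Lemma fB_lt (R : rcfType) (lam b : R[i]) i j : (j < i)%N -> fB lam b i j = 0.
Proof. by rewrite /fB => ->. Qed.

Lemma nSn_false n : (n == n.+1) = false.
Proof. by apply/negbTE/eqP; lia. Qed.

Section J.
Variable F : comNzRingType.
Ltac simp := rewrite ?(mulr0n, mulr1n, mul0r, mul1r, mulr0, mulr1, add0r, addr0).

Lemma mulJ0 n (a : F) (X : 'M[F]_n) (i k : 'I_n) : val k = 0 ->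
  (X *m jordan_block n a) i k = X i k * a.
Proof.
move=> hk; rewrite mxE (bigD1 k) //= mxE eqxx hk /=; simp.
rewrite big1 ?addr0 // => j hj; rewrite mxE (negbTE hj : (j == k :> nat) = false) hk /=.
by simp.
Qed.

Lemma mulJS n (a : F) (X : 'M[F]_n) (i j k : 'I_n) : val k = j.+1 ->
  (X *m jordan_block n a) i k = X i k * a + X i j.
Proof.
move=> hk; rewrite mxE (bigD1 k) //= (bigD1 j) /=; last first.
  by apply/eqP => /(congr1 val); rewrite /= hk; lia.
rewrite !mxE eqxx hk eqxx /= (_ : (j == j.+1 :> nat) = false); last first.
  by apply/negbTE/eqP; lia.
rewrite nSn_false.
rewrite big1 ?addr0; last first.
  move=> l /andP [hl1 hl2]; rewrite mxE (negbTE hl1 : (l == k :> nat) = false) hk eqSS eq_sym (negbTE hl2 : (l == j :> nat) = false).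
  by simp.
by simp.
Qed.

Lemma Jmul_last n (a : F) (X : 'M[F]_n) (i k : 'I_n) : i.+1 = n ->
  (jordan_block n a *m X) i k = a * X i k.
Proof.
move=> hi; rewrite mxE (bigD1 i) //= big1 ?addr0.
  by rewrite mxE eqxx /= (_ : (i == i.+1 :> nat) = false); [simp | apply/negbTE/eqP; lia].
move=> j hj; rewrite mxE eq_sym (negbTE hj : (j == i :> nat) = false).
by rewrite (_ : (j == i.+1 :> nat) = false); [simp | apply/negbTE/eqP; have := ltn_ord j; lia].
Qed.

Lemma JmulS n (a : F) (X : 'M[F]_n) (i j k : 'I_n) : val j = i.+1 ->
  (jordan_block n a *m X) i k = a * X i k + X j k.
Proof.
move=> hj; rewrite mxE (bigD1 i) //= (bigD1 j) /=; last first.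
  by apply/eqP => /(congr1 val); rewrite /= hj; lia.
rewrite !mxE eqxx hj eqxx /= (_ : (i == i.+1 :> nat) = false); last first.
  by apply/negbTE/eqP; lia.
rewrite big1 ?addr0; last first.
  move=> l /andP [hl1 hl2]; rewrite mxE eq_sym (negbTE hl1 : (l == i :> nat) = false) -hj (negbTE hl2 : (l == j :> nat) = false).
  by simp.
by simp.
Qed.
End J.

Lemma eqS0 n : (n.+1 == 0%N) = false. Proof. by []. Qed.

Lemma keyA (R : rcfType) (lam b : R[i]) i : lam != 0 ->
  (lam^-1 * fB lam b i 0 + fB lam b i.+1 0) * lam = fB lam b i 0.
Proof.
move=> hl; case: i => [|i]; rewrite ?fB00 ?fBS0; first by field.
by rewrite mulr0 addr0 mul0r.
Qed.

Lemma keyS (R : rcfType) (lam b : R[i]) i k : lam != 0 ->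
  (lam^-1 * fB lam b i k.+1 + fB lam b i.+1 k.+1) * lam
  + (lam^-1 * fB lam b i k + fB lam b i.+1 k) = fB lam b i k.+1.
Proof.
move=> hl; case: i => [|i]; case: k => [|k];
  rewrite ?fB00 ?fB0S ?fBS0 ?fBSS ?bin0 ?bin0n ?eqS0 ?binS ?natrD ?addnS ?addSn ?addn0 ?add0n ?exprS;
  rewrite ?mulr0n; try (set c := (nat_of_bool _)%:R);
  field; by rewrite ?expf_neq0.
Qed.

Lemma KB_E (R : rcfType) n (lam b : R[i]) (i k : 'I_n) :
  (jordan_block n lam^-1 *m Bmat n lam b) i k
  = lam^-1 * fB lam b i k + fB lam b i.+1 k.
Proof.
case: (ltnP i.+1 n) => h.
  by rewrite (@JmulS _ _ _ _ _ (Ordinal h)) // !BmatE.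
have e : i.+1 = n by apply/eqP; rewrite eqn_leq h ltn_ord.
rewrite Jmul_last // BmatE (@fB_lt _ _ _ i.+1) ?addr0 //.
by have := ltn_ord k; lia.
Qed.

Lemma relKBJ (R : rcfType) n (lam b : R[i]) : lam != 0 ->
  jordan_block n lam^-1 *m Bmat n lam b *m jordan_block n lam = Bmat n lam b.
Proof.
move=> hl; apply/matrixP => i k.
case hk: (val k) => [|k'].
  by rewrite mulJ0 // KB_E BmatE hk keyA.
have hk' : (k' < n)%N by have := ltn_ord k; rewrite hk => /ltnW.
rewrite (@mulJS _ _ _ _ _ (Ordinal hk')) // !KB_E BmatE hk /=.
exact: keyS.
Qed.

Definition mxconjK (R : rcfType) m n (M : 'M[R[i]]_(m, n)) : mxconj (mxconj M) = M.
Proof. by apply/matrixP => i j; rewrite !mxE conjcK. Qed.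

Lemma mxconjM (R : rcfType) m n p (A : 'M[R[i]]_(m, n)) (B : 'M[R[i]]_(n, p)) :
  mxconj (A *m B) = mxconj A *m mxconj B.
Proof. exact: map_mxM. Qed.

Lemma mxconj_jordan (R : rcfType) n (a : R[i]) :
  mxconj (jordan_block n a) = jordan_block n (conjc a).
Proof.
by apply/matrixP => i j; rewrite !mxE rmorphD rmorphM /= !conjc_nat.
Qed.

Lemma mxconjE (R : rcfType) m n (M : 'M[R[i]]_(m, n)) i j :
  mxconj M i j = conjc (M i j).
Proof. by rewrite mxE. Qed.

Lemma BcB (R : rcfType) n (lam b : R[i]) : lam != 0 -> conjc lam = lam^-1 ->
  b * conjc b = 1 ->
  Bmat n lam b *m mxconj (Bmat n lam b) = 1%:M.
Proof.
move=> hl cl hb.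
set B := Bmat n lam b; set K := jordan_block n lam^-1; set J := jordan_block n lam.
have rel : K *m B *m J = B := @relKBJ _ n lam b hl.
have rel2 : J *m mxconj B *m K = mxconj B.
  have := congr1 (@mxconj _ _ _) rel.
  by rewrite !mxconjM /K /J !mxconj_jordan conjc_inv cl invrK.
have comm : K *m (B *m mxconj B) = (B *m mxconj B) *m K.
  by rewrite -{1}rel2 !mulmxA rel.
set M := B *m mxconj B.
have main : forall m (i k : 'I_n), val i = m -> M i k = (val i == val k)%:R.
  elim=> [|m IH] i k hi.
    rewrite /M mxE (bigD1 i) //= big1 ?addr0.
      rewrite mxconjE !BmatE hi; case: (val k) => [|k'].
        by rewrite fB00 hb.
      by rewrite fB0S conjc0 mulr0.
    move=> j hj; rewrite !BmatE hi.
    case hj': (val j) => [|j'].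
      by move: hj; rewrite -val_eqE hi hj' eqxx.
    by rewrite fB0S mul0r.
  have hm : (m < n)%N by have := ltn_ord i; rewrite hi => /ltnW.
  have := congr1 (fun X : 'M[R[i]]_n => X (Ordinal hm) k) comm.
  rewrite (@JmulS _ _ _ _ _ i) //=.
  case hk: (val k) => [|k'].
    rewrite mulJ0 // => e.
    rewrite hi /=; apply: (addrI (lam^-1 * M (Ordinal hm) k)).
    by rewrite e mulrC addr0.
  have hk' : (k' < n)%N by have := ltn_ord k; rewrite hk => /ltnW.
  rewrite (@mulJS _ _ _ _ _ (Ordinal hk')) // => e.
  rewrite hi /= eqSS -(IH (Ordinal hm) (Ordinal hk')) //.
  by apply: (addrI (lam^-1 * M (Ordinal hm) k)); rewrite e mulrC.
apply/matrixP => i k; rewrite (main _ i k erefl) mxE.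
by [].
Qed.

Theorem lemma3p7 (R : realType) (n : nat) (lam : R[i]) :
  (0 < n)%N ->
  `|lam| = 1 ->
  \det (jordan_block n lam) = 1 ->
  exists b : R[i],
    `|b| = 1 /\
    \det (Bmat n lam b) = 1 /\
    Bmat n lam b *m mxconj (Bmat n lam b) = 1%:M /\
    Bmat n lam b *m jordan_block n lam *m invmx (Bmat n lam b)
      = invmx (mxconj (jordan_block n lam)).
Proof.
move=> hn hlam _.
have hl : lam != 0.
  apply/eqP => h; move: hlam; rewrite h normr0 => /eqP; by rewrite eq_sym oner_eq0.
have cl : conjc lam = lam^-1 by rewrite invc_norm hlam expr1n invr1 mul1r.
case: n hn => // n' _.
pose e (i : nat) : R[i] := (-1) ^+ i.+1 * ('C(i, i))%:R / lam ^+ (i + i + 2).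
pose d := \prod_(i < n') e i.
have detB : forall b, \det (Bmat n'.+1 lam b) = b ^+ n'.+1 * d.
  move=> b; rewrite -det_tr det_trig; last first.
    by apply/is_trig_mxP => i j hij; rewrite mxE BmatE fB_lt.
  rewrite big_ord_recl mxE BmatE fB00.
  rewrite (eq_bigr (fun i : 'I_n' => b * e i)); last first.
    move=> i _; rewrite mxE BmatE lift0 fBSS /e; field.
    by rewrite expf_neq0.
  by rewrite big_split /= prodr_const card_ord exprS mulrA.
have hd : `|d| = 1.
  rewrite /d normr_prod; apply: big1 => i _.
  by rewrite /e normrM normfV normrM normrX normrN1 binn normr1 normrX hlam !expr1n invr1 !mulr1.
have d0 : d != 0 by rewrite -normr_eq0 hd oner_eq0.
exists (n'.+1.-root d^-1).
set b := n'.+1.-root d^-1.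
have hb : `|b| = 1 by rewrite /b norm_rootC normfV hd invr1 rootC1.
have hdetB : \det (Bmat n'.+1 lam b) = 1 by rewrite detB rootCK // mulVf.
split=> //; split=> //; split.
  apply: BcB => //; by rewrite -sqr_normc hb expr1n.
rewrite mxconj_jordan cl.
set K := jordan_block n'.+1 lam^-1; set B := Bmat n'.+1 lam b.
have Bu : B \in unitmx by rewrite unitmxE hdetB unitr1.
have e1 : K *m (B *m jordan_block n'.+1 lam *m invmx B) = 1%:M.
  by rewrite !mulmxA relKBJ // mulmxV.
have [Ku _] := mulmx1_unit e1.
by rewrite -[RHS]mulmx1 -e1 mulmxA mulVmx // mul1mx.
Qed.
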